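(* Let $U\subset\mathbb R^m$ be open and assume (A1), (A2)–(A3) for all $u\in U$ and all unit $d$, (A4) at every $u\in U$, and condition (B) at every $u\in U$. Let $u_0\in U$ and $x_0\in S(u_0)$. Then the function $w:U\to\mathbb R$, $w(u)=f(x_0,u)$, is a viscosity subsolution at $u_0$ of $-\nabla w(u)\cdot d+\inf_{x\in S(u)}D_df_x(u)=0$ for every unit $d\in\mathbb R^m$, i.e. $-\eta\cdot d+\inf_{x\in S(u_0)}D_df_x(u_0)\le0$ for every $\eta\in\mathcal J^+w(u_0)$.
   Context: $\mathfrak X$ real Banach space, $X\subset\mathfrak X$ nonempty, $f:X\times U\to\mathbb R$, $\Phi:U\to2^X$, $v(u)=\inf_{x\in\Phi(u)}f(x,u)$, $S(u)=\{x\in\Phi(u):f(x,u)=v(u)\}$, $f_x(u)=f(x,u)$, $D_df_x(u)=\lim_{s\downarrow0}\frac{f(x,u+sd)-f(x,u)}{s}$. $\mathcal J^+w(u_0)=\{p\in\mathbb R^m:\limsup_{u\to u_0}\frac{w(u)-w(u_0)-p\cdot(u-u_0)}{|u-u_0|}\le0\}$. (A1): $f$ continuous and for each $u$ there exist $\alpha$, compact $C$ with $\emptyset\ne\{x\in\Phi(u'):f(x,u')\le\alpha\}\subset C$ for $u'$ near $u$. (A2) at $u$, $d$: $D_df_x(u)$ exists for $x\in\Phi(u)$ and $\inf_{x\in S(u)}D_df_x(u)>-\infty$. (A3) at $u$, $d$: $\{x_k\}\subset\Phi(u)$, $x_k\to x$ implies $D_df_x(u)\le\limsup_kD_df_{x_k}(u)$.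 (A4) at $u$: there exist $C_0>0$ and a neighborhood $\mathcal N$ of $u$ with $\inf_{x\in S(u_1)}D_df_x(u_1)>-C_0$ for $u_1\in\mathcal N$ and unit $d$. Condition (B): $\Phi$ constant equal to a nonempty closed subset of $X$, or $\Phi(u)=\{x\in X:G(x,u)\in K\}$ with $G$ continuous into a topological vector space, $K$ closed with nonempty interior, and $G(x,u)\in\operatorname{int}K$ for $x\in S(u)$. *)

(* Defs.v *)
From HB Require Import structures.
From mathcomp Require Import all_boot all_order all_algebra.
From mathcomp Require Import all_classical all_reals all_analysis.
Set Implicit Arguments. Unset Strict Implicit. Unset Printing Implicit Defensive.
Import Order.TTheory GRing.Theory Num.Theory.
Import numFieldNormedType.Exports.
Local Open Scope classical_set_scope.
Local Open Scope ring_scope.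

Definition dotv (R : realType) (m : nat) (p q : 'rV[R]_m) : R :=
  \sum_(i < m) p ord0 i * q ord0 i.
Definition enorm (R : realType) (m : nat) (p : 'rV[R]_m) : R :=
  Num.sqrt (dotv p p).

Definition dquot (R : realType) (E : Type) (m : nat)
  (f : E -> 'rV[R]_m -> R) (x : E) (u d : 'rV[R]_m) : R -> R :=
  fun s => (f x (u + s *: d) - f x u) / s.

Definition has_Dd (R : realType) (E : Type) (m : nat)
  (f : E -> 'rV[R]_m -> R) (x : E) (u d : 'rV[R]_m) : Prop :=
  cvg (dquot f x u d @ 0^'+).

Definition Dd (R : realType) (E : Type) (m : nat)
  (f : E -> 'rV[R]_m -> R) (x : E) (u d : 'rV[R]_m) : R :=
  lim (dquot f x u d @ 0^'+).

Definition valfun (R : realType) (E : Type) (m : nat)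
  (f : E -> 'rV[R]_m -> R) (Phi : 'rV[R]_m -> set E) (u : 'rV[R]_m) : R :=
  inf [set f x u | x in Phi u].

Definition solset (R : realType) (E : Type) (m : nat)
  (f : E -> 'rV[R]_m -> R) (Phi : 'rV[R]_m -> set E) (u : 'rV[R]_m) : set E :=
  [set x | Phi u x /\ f x u = valfun f Phi u].

Definition infDd (R : realType) (E : Type) (m : nat)
  (f : E -> 'rV[R]_m -> R) (Phi : 'rV[R]_m -> set E) (u d : 'rV[R]_m) : \bar R :=
  ereal_inf [set (Dd f x u d)%:E | x in solset f Phi u].

(* superdifferential J^+ w(u0): limsup_{u -> u0} (w u - w u0 - p.(u-u0))/|u-u0| <= 0,
   written out with epsilon-delta (u ranging in U, u <> u0) *)
Definition superdiff (R : realType) (m : nat) (U : set 'rV[R]_m)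
  (w : 'rV[R]_m -> R) (u0 : 'rV[R]_m) : set 'rV[R]_m :=
  [set p | forall eps : R, 0 < eps -> exists2 delta : R, 0 < delta &
     forall u, U u -> u != u0 -> enorm (u - u0) < delta ->
       (w u - w u0 - dotv p (u - u0)) / enorm (u - u0) <= eps].

Definition condA1 (R : realType) (E : normedModType R) (m : nat)
  (X : set E) (U : set 'rV[R]_m) (f : E -> 'rV[R]_m -> R)
  (Phi : 'rV[R]_m -> set E) : Prop :=
  {within X `*` U, continuous (fun p : E * 'rV[R]_m => f p.1 p.2)} /\
  forall u, U u -> exists alpha : R, exists2 C : set E, compact C &
    \forall u' \near u, U u' /\
      [set x | Phi u' x /\ f x u' <= alpha] !=set0 /\
      [set x | Phi u' x /\ f x u' <= alpha] `<=` C.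

Definition condA2 (R : realType) (E : Type) (m : nat)
  (f : E -> 'rV[R]_m -> R) (Phi : 'rV[R]_m -> set E) (u d : 'rV[R]_m) : Prop :=
  (forall x, Phi u x -> has_Dd f x u d) /\ (-oo < infDd f Phi u d)%E.

Definition condA3 (R : realType) (E : normedModType R) (m : nat)
  (f : E -> 'rV[R]_m -> R) (Phi : 'rV[R]_m -> set E) (u d : 'rV[R]_m) : Prop :=
  forall (xk : nat -> E) (x : E), (forall k, Phi u (xk k)) -> Phi u x ->
    xk @ \oo --> x ->
    ((Dd f x u d)%:E <= limn_esup (fun k => (Dd f (xk k) u d)%:E))%E.

Definition condA4 (R : realType) (E : Type) (m : nat) (U : set 'rV[R]_m)
  (f : E -> 'rV[R]_m -> R) (Phi : 'rV[R]_m -> set E) (u : 'rV[R]_m) : Prop :=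
  exists2 C0 : R, 0 < C0 & exists2 N : set 'rV[R]_m, nbhs u N &
    forall u1 d, N u1 -> U u1 -> enorm d = 1 -> ((- C0)%:E < infDd f Phi u1 d)%E.

Definition condB (R : realType) (E : normedModType R) (m : nat)
  (X : set E) (U : set 'rV[R]_m) (f : E -> 'rV[R]_m -> R)
  (Phi : 'rV[R]_m -> set E) : Prop :=
  (exists F : set E, [/\ F `<=` X, F !=set0,
      (exists2 Cl : set E, closed Cl & F = X `&` Cl) &
      forall u, U u -> Phi u = F])
  \/
  (exists (Y : topologicalLmodType R) (G : E -> 'rV[R]_m -> Y) (K : set Y),
     [/\ {within X `*` U, continuous (fun p : E * 'rV[R]_m => G p.1 p.2)},
         closed K, interior K !=set0,
         (forall u, U u -> Phi u = [set x | X x /\ K (G x u)]) &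
         (forall u x, U u -> solset f Phi u x -> interior K (G x u))]).

(* Main.v *)
Require Import Defs.
From HB Require Import structures.
From mathcomp Require Import all_boot all_order all_algebra.
From mathcomp Require Import all_classical all_reals all_analysis.
From mathcomp Require Import ring lra.
Import Order.TTheory GRing.Theory Num.Theory.
Import numFieldNormedType.Exports.
Local Open Scope classical_set_scope.
Local Open Scope ring_scope.

Lemma enormZ (R : realType) (m : nat) (s : R) (d : 'rV[R]_m) :
  enorm (s *: d) = `|s| * enorm d.
Proof.
rewrite /enorm.
have -> : dotv (s *: d) (s *: d) = s ^+ 2 * dotv d d.
  rewrite /dotv mulr_sumr; apply: eq_bigr => i _; rewrite !mxE; ring.
by rewrite sqrtrM ?sqrtr_sqr // sqr_ge0.
Qed.

Theorem mainTheorem9 (R : realType) (E : completeNormedModType R) (m : nat)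
  (X : set E) (U : set 'rV[R]_m) (f : E -> 'rV[R]_m -> R)
  (Phi : 'rV[R]_m -> set E) :
  X !=set0 ->
  open U ->
  (forall u, U u -> Phi u `<=` X) ->
  condA1 X U f Phi ->
  (forall u d, U u -> enorm d = 1 -> condA2 f Phi u d) ->
  (forall u d, U u -> enorm d = 1 -> condA3 f Phi u d) ->
  (forall u, U u -> condA4 U f Phi u) ->
  condB X U f Phi ->
  forall u0 x0, U u0 -> solset f Phi u0 x0 ->
  forall d : 'rV[R]_m, enorm d = 1 ->
  forall eta, superdiff U (fun u => f x0 u) u0 eta ->
    ((- dotv eta d)%:E + infDd f Phi u0 d <= 0)%E.
Proof.
move=> _ oU _ _ A2 _ _ _ u0 x0 Uu0 Sx0 d nd eta Heta.
have Hinf : (infDd f Phi u0 d <= (Dd f x0 u0 d)%:E)%E.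
  by apply: ereal_inf_lbound; exists x0.
have Hcvg : has_Dd f x0 u0 d by case: (A2 u0 d Uu0 nd) => h _; apply: h; case: Sx0.
have dne0 : d != 0.
  apply/eqP => d0; move: nd; rewrite d0 /enorm /dotv.
  under eq_bigr => i _ do rewrite mxE mul0r.
  by rewrite big1 // sqrtr0 => /eqP; rewrite eq_sym oner_eq0.
have Hlim : (fun s : R => u0 + s *: d) @ 0^'+ --> u0.
  apply: cvg_within_filter.
  rewrite -{2}(addr0 u0); apply: cvgD; first exact: cvg_cst.
  rewrite -(scale0r d); apply: cvgZl; exact: cvg_id.
have nU : \forall s \near 0^'+, U (u0 + s *: d).
  apply: Hlim; move: oU; rewrite openE => /(_ u0 Uu0); exact.
have HD : Dd f x0 u0 d <= dotv eta d.
  apply/ler_addgt0Pr => e e0.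
  have [del del0 Hdel] := Heta e e0.
  apply: limr_le => //.
  near=> s.
  have s0 : 0 < s by near: s; exact: nbhs_right_gt.
  have : U (u0 + s *: d) by near: s; exact: nU.
  move=> Us.
  have sdel : s < del by near: s; exact: nbhs_right_lt.
  have sne : u0 + s *: d != u0.
    by rewrite -subr_eq0 addrAC subrr add0r scaler_eq0 negb_or dne0 andbT gt_eqF.
  have := Hdel (u0 + s *: d) Us sne.
  rewrite addrAC subrr add0r enormZ nd mulr1 gtr0_norm //.
  move=> /(_ sdel).
  have -> : dotv eta (s *: d) = s * dotv eta d.
    rewrite /dotv mulr_sumr; apply: eq_bigr => i _; rewrite !mxE; ring.
  rewrite /dquot ler_pdivrMr // ler_pdivrMr //.
  move=> h; rewrite mulrDl; lra.
have : (infDd f Phi u0 d <= (dotv eta d)%:E)%E.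
  apply: (le_trans Hinf); by rewrite lee_fin.
case: (infDd f Phi u0 d) => [r||] //=.
  by rewrite lee_fin => h; rewrite -EFinD lee_fin; lra.
by rewrite addeNy leNye.
Unshelve. all: end_near.
Qed.
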